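(* Let $N\ge1$, $1\le S\le N$, $L$ a band-width vector, $\dot W$ a real symmetric $N\times N$ matrix, $k\in\mathbb Z$, $\beta\in\mathbb R^S$, $\varepsilon>0$, $W_\varepsilon=\mathrm{Id}+\varepsilon\dot W$, $D_\beta=D_{k,\beta,L}$ and $P_{\varepsilon,\beta}=D_\beta W_\varepsilon$. If $f,g\in\mathbb C^N$ and $\lambda\in\mathbb C$ satisfy $P_{\varepsilon,\beta}f=\lambda f$ and $P_{\varepsilon,\beta}g=\lambda g+f$, then $\langle f,D_\beta\overline f\rangle=0$.
   Context: A band-width vector is $L=(L_1,\dots,L_S)$ of positive integers with $\sum_sL_s=N$; $N_0=0$, $N_s=N_{s-1}+L_s$, $B_s=\{j:N_{s-1}<j\le N_s\}$. $D_{k,\beta,L}$ is the $N\times N$ diagonal matrix whose $j$-th diagonal entry is $e^{-2\pi ik\beta_s}$ for $j\in B_s$. $\overline f$ denotes the entrywise complex conjugate and $\langle v,w\rangle=\sum_{j=1}^Nv_j\overline{w_j}$. *)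

(* Defs.v *)
From HB Require Import structures.
From mathcomp Require Import all_boot all_order all_algebra.
From mathcomp Require Import all_classical all_reals all_analysis.
From mathcomp Require Import complex.
Set Implicit Arguments. Unset Strict Implicit. Unset Printing Implicit Defensive.
Import Order.TTheory GRing.Theory Num.Theory.
Local Open Scope ring_scope.
Local Open Scope complex_scope.

(* Band-width vector: a list L of positive naturals with sum N; S = size L. *)
Definition bandwidth_vector (N : nat) (L : seq nat) : Prop :=
  all (fun l => 0 < l)%N L /\ (\sum_(l <- L) l)%N = N.

Definition psum (L : seq nat) (s : nat) : nat := (\sum_(i < s) nth 0 L i)%N.

(* 0-indexed block index of 0-indexed coordinate j: the (0-indexed) s with
   psum L s <= j < psum L s.+1, i.e. the paper's (1-indexed) block B_{s+1}
   containing the paper's (1-indexed) coordinate j+1. *)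
Definition block_of (L : seq nat) (j : nat) : nat :=
  find (fun s => j < psum L s.+1)%N (iota 0 (size L)).

Definition expmi (R : realType) (t : R) : R[i] := (cos t) +i* (- sin t).

Definition Dmat {R : realType} {N : nat} (k : int) (beta : seq R) (L : seq nat)
  : 'M[R[i]]_N :=
  \matrix_(i < N, j < N)
    (if i == j then expmi (2 * pi * k%:~R * nth 0 beta (block_of L i)) else 0).

Definition Weps {R : realType} {N : nat} (eps : R) (Wdot : 'M[R]_N) : 'M[R[i]]_N :=
  map_mx (fun x : R => x%:C) (1%:M + eps *: Wdot).

Definition cinner {R : realType} {N : nat} (v w : 'cV[R[i]]_N) : R[i] :=
  \sum_(j < N) v j 0 * (w j 0)^*.

(* Main.v *)
Require Import Defs.
From HB Require Import structures.
From mathcomp Require Import all_boot all_order all_algebra.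
From mathcomp Require Import all_classical all_reals all_analysis.
From mathcomp Require Import complex.
From mathcomp Require Import ring lra.
Import Order.TTheory GRing.Theory Num.Theory.
Local Open Scope ring_scope.
Local Open Scope complex_scope.

Lemma conjcM (R : rcfType) (a b : R[i]) : (a * b)^* = a^* * b^*.
Proof. by case: a => a1 a2; case: b => b1 b2; rewrite /= ; congr (_ +i* _); ring. Qed.

Lemma conjcK (R : rcfType) (a : R[i]) : a^*^* = a.
Proof. by case: a => a1 a2 /=; rewrite opprK. Qed.

Lemma expmi_unit (R : realType) (t : R) : expmi t * (expmi t)^* = 1.
Proof.
rewrite /expmi /=; congr (_ +i* _); last by ring.
by rewrite -(cos2Dsin2 t); ring.
Qed.

Lemma key (R : rcfType) (N : nat) (d : 'rV[R[i]]_N) (Wm : 'M[R[i]]_N)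
  (f g : 'cV[R[i]]_N) (lambda : R[i]) :
  (forall i, d 0 i * (d 0 i)^* = 1) -> Wm^T = Wm ->
  diag_mx d *m Wm *m f = lambda *: f ->
  diag_mx d *m Wm *m g = lambda *: g + f ->
  f^T *m diag_mx (map_mx conjc d) *m f = 0.
Proof.
move=> hd hW h1 h2.
set M := diag_mx d; set Dc := diag_mx (map_mx conjc d).
have e1 : Dc *m M = 1%:M.
  apply/matrixP => i j; rewrite mul_diag_mx !mxE; case: eqP => [->|_];
  by rewrite ?mulr1n ?mulr0n ?mulr0 // mulrC hd.
have e2 : M *m Dc = 1%:M.
  apply/matrixP => i j; rewrite mul_diag_mx !mxE; case: eqP => [->|_];
  by rewrite ?mulr1n ?mulr0n ?mulr0 // hd.
have A : f^T *m Dc *m (M *m Wm *m g) = f^T *m Wm *m g.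
  by rewrite !mulmxA -(mulmxA _ Dc) e1 mulmx1.
have B : (M *m Wm *m f)^T *m Dc *m g = f^T *m Wm *m g.
  rewrite !trmx_mul hW tr_diag_mx -/M -!mulmxA; congr (_ *m _).
  by rewrite (mulmxA M) e2 mul1mx.
rewrite h2 in A; rewrite h1 in B.
move: A B; rewrite mulmxDr linearZ /= => A B.
rewrite [(lambda *: f)^T]linearZ /= -!scalemxAl in B.
apply: (addrI (lambda *: (f^T *m Dc *m g))).
by rewrite addr0 A B.
Qed.

Theorem lemma3p5 (R : realType) (N : nat) (L : seq nat) (Wdot : 'M[R]_N)
  (k : int) (beta : seq R) (eps : R) (f g : 'cV[R[i]]_N) (lambda : R[i]) :
  (1 <= N)%N -> (1 <= size L <= N)%N -> bandwidth_vector N L ->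
  Wdot^T = Wdot -> size beta = size L -> 0 < eps ->
  (Dmat k beta L *m Weps eps Wdot) *m f = lambda *: f ->
  (Dmat k beta L *m Weps eps Wdot) *m g = lambda *: g + f ->
  cinner f (Dmat k beta L *m map_mx (fun z => z^*) f) = 0.
Proof.
move=> _ _ _ hW _ _ h1 h2.
set d : 'rV[R[i]]_N := \row_j expmi (2 * pi * k%:~R * nth 0 beta (block_of L j)).
have eD : Dmat k beta L = diag_mx d.
  by apply/matrixP => i j; rewrite !mxE; case: eqP => [->|_]; rewrite ?mulr1n ?mulr0n.
have hWm : (Weps eps Wdot)^T = Weps eps Wdot.
  by rewrite /Weps map_trmx linearD linearZ /= tr_scalar_mx hW.
rewrite eD in h1 h2 *.
have hd : forall i, d 0 i * (d 0 i)^* = 1 by move=> i; rewrite mxE expmi_unit.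
have := @key _ _ _ _ _ _ _ hd hWm h1 h2.
move=> /matrixP /(_ 0 0); rewrite [RHS]mxE => <-.
rewrite /cinner mul_mx_diag [RHS]mxE; apply: eq_bigr => j _.
rewrite (mul_diag_mx d).
by rewrite !mxE rmorphM /= conjCK mulrA.
Qed.
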